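(* Let $S=\{p_1,\dots,p_n\}$ be a set of point sites in $\mathbb{R}^d$ with an admissible system of distance functions $\{d_{p_i}\}$, let $C\subset\mathbb{R}^d$ be a bounded open set, and let $\lambda_1,\dots,\lambda_n>0$ with $\sum_i\lambda_i=\mu(C)$. Let $w=(w_1,\dots,w_n)$ be a weight vector with $\mu(C\cap\mathrm{VR}_w(p_i,S))=\lambda_i$ for $i=1,\dots,n$, and let $f_w:C\to S$ be a map with $f_w(z)=p_i$ for $z\in C_i:=C\cap\mathrm{VR}_w(p_i,S)$ (on the remaining points $C\cap V_w(S)$, $f_w$ assigns some site $p_i$ minimizing $d_{p_i}(z)-w_i$). Then $f_w\in F_\Lambda$ and $f_w$ minimizes $$\mathrm{cost}(f)=\int_C d_{f(z)}(z)\,\mathrm{d}\mu(z)$$ over all $f\in F_\Lambda$. Moreover, any $f\in F_\Lambda$ with $\mathrm{cost}(f)=\mathrm{cost}(f_w)$ coincides with $f_w$ outside a set of $\mu$-measure zero.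
   Context: $\mu$ is a measure defined on all Lebesgue-measurable subsets of $\mathbb{R}^d$ such that $\mu$ and $d$-dimensional Lebesgue measure are mutually absolutely continuous. Each site $p\in S$ has a continuous function $d_p:\mathbb{R}^d\to\mathbb{R}_{\ge 0}$. For $p\neq q\in S$ and $\gamma\in\mathbb{R}$ let $R_\gamma(p,q)=\{z\in\mathbb{R}^d : d_p(z)-d_q(z)<\gamma\}$. The system $\{d_p\}_{p\in S}$ is called admissible if for all $p\neq q\in S$ and every bounded open set $C\subset\mathbb{R}^d$ there exist real numbers $m_{pq}<M_{pq}$ such that the function $\gamma\mapsto\mu(C\cap R_\gamma(p,q))$ is continuous on $\mathbb{R}$ and increases (monotonically) from $0$ to $\mu(C)$ as $\gamma$ grows from $m_{pq}$ to $M_{pq}$; moreover $C\cap R_\gamma(p,q)=\emptyset$ for $\gamma\le m_{pq}$ and $C\subset R_\gamma(p,q)$ for $\gamma\ge M_{pq}$. For a weight vector $w$, $\mathrm{VR}_w(p_i,S)=\bigcap_{j\neq i}R_{w_i-w_j}(p_i,p_j)$ (points $z$ with $d_{p_i}(z)-w_i<d_{p_j}(z)-w_j$ for all $j\neq i$), and $V_w(S)=\mathbb{R}^d\setminus\bigcup_i\mathrm{VR}_w(p_i,S)$. $F_\Lambda$ denotes the set of $\mu$-measurable maps $f:C\to S$ (each $f^{-1}(p_i)$ measurable) with $\mu(f^{-1}(p_i))=\lambda_i$ for $i=1,\dots,n$. *)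

(* Defs.v *)
From HB Require Import structures.
From mathcomp Require Import all_boot all_order all_algebra.
From mathcomp Require Import all_classical all_reals all_analysis.
Set Implicit Arguments. Unset Strict Implicit. Unset Printing Implicit Defensive.
Import Order.TTheory GRing.Theory Num.Theory.
Import numFieldNormedType.Exports.
Local Open Scope classical_set_scope.
Local Open Scope ring_scope.

Section Defs.
Variables (R : realType) (d : nat).

Definition Rd := 'rV[R]_d.

Definition box (a b : Rd) : set Rd :=
  [set x | forall i : 'I_d, a ord0 i < x ord0 i < b ord0 i].
Definition box_vol (a b : Rd) : R :=
  \prod_(i < d) Num.max 0 (b ord0 i - a ord0 i).

(* d-dimensional Lebesgue null sets: Lebesgue outer measure zero, i.e.
   coverable by countably many boxes of arbitrarily small total volume *)
Definition leb_null (A : set Rd) : Prop :=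
  forall e : R, 0 < e -> exists a b : nat -> Rd,
    A `<=` \bigcup_k box (a k) (b k) /\
    forall N, \sum_(k < N) box_vol (a k) (b k) <= e.

Definition borel_Rd : set (set Rd) := <<s [set A : set Rd | open A] >>.

(* Lebesgue-measurable sets = completion of the Borel sets w.r.t. null sets *)
Definition leb_measurable : set (set Rd) :=
  [set A | exists B N, borel_Rd B /\ leb_null N /\
     (A `\` B) `|` (B `\` A) `<=` N].

(* R^d equipped with the sigma-algebra of Lebesgue-measurable sets
   (leb_measurable is itself a sigma-algebra, so the generated one equals it) *)
Definition LebRd := g_sigma_algebraType leb_measurable.

Definition Rgam (dp dq : Rd -> R) (g : R) : set Rd :=
  [set z | dp z - dq z < g].

Definition bounded_Rd (C : set Rd) : Prop :=
  exists M : R, forall x, C x -> `|x| <= M.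

End Defs.

(* Main.v *)
Require Import Defs.
From HB Require Import structures.
From mathcomp Require Import all_boot all_order all_algebra.
From mathcomp Require Import all_classical all_reals all_analysis.
From mathcomp Require Import lra.
From mathcomp Require Import measurable_realfun.
Import Order.TTheory GRing.Theory Num.Theory.
Import numFieldNormedType.Exports.
Local Open Scope classical_set_scope.
Local Open Scope ring_scope.
Lemma open_measL (R : realType) (d : nat) (A : set (Rd R d)) :
  @leb_null R d set0 -> open A -> measurable (A : set (LebRd R d)).
Proof.
move=> h0 oA; apply: sub_sigma_algebra.
exists A, set0; split; last split => //.
  by apply: sub_sigma_algebra.
by rewrite setDv set0U.
Qed.

Lemma null_measL (R : realType) (d : nat) (A : set (Rd R d)) :
  leb_null A -> measurable (A : set (LebRd R d)).
Proof.
move=> hA; apply: sub_sigma_algebra.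
exists set0, A; split; last split => //.
  exact: sigma_algebra0.
by rewrite setD0 set0D setU0.
Qed.

Lemma null_subL (R : realType) (d : nat)
  (mu : {measure set (LebRd R d) -> \bar R}) :
  (forall A : set (LebRd R d), measurable A -> (mu A = 0%E <-> leb_null A)) ->
  forall (N B : set (LebRd R d)), measurable N -> mu N = 0%E -> B `<=` N ->
  measurable B /\ mu B = 0%E.
Proof.
move=> hmu N B mN N0 BN.
have nB : @leb_null R d B.
  move=> e e0; have [a [b [h1 h2]]] := (proj1 (hmu N mN) N0) e e0.
  by exists a, b; split => //; apply: subset_trans h1.
have mB := null_measL _ _ _ nB.
by split => //; apply/(hmu B mB).
Qed.

Lemma cont_measL (R : realType) (d : nat) (g : Rd R d -> R) (D : set (LebRd R d)) :
  @leb_null R d set0 -> continuous g -> measurable_fun D (g : LebRd R d -> R).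
Proof.
move=> h0 cg mD; apply: (measurability _ (measurable_realfun.RGenOInfty.measurableE R)) => //.
move=> _ [_ [x ->] <-]; apply: measurableI => //.
apply: (open_measL _ _ _ h0).

by apply: open_comp => // z _; apply: cg; apply: open_gt.
Qed.
Lemma ltrDl_ok (R : realType) (K : R) : K < K + 1. Proof. by rewrite ltrDl. Qed.

Lemma bound_contL (R : realType) (d : nat) (g : Rd R d -> R) (C : set (Rd R d)) :
  continuous g -> bounded_Rd C -> exists K : R, forall z, C z -> g z <= K.
Proof.
move=> cg [M hM].
set r := `|M| + 1.
have r0 : 0 < r by rewrite /r ltr_pwDr // normr_ge0.
set B := closed_ball (0 : 'rV[R]_d) r.
have CB : C `<=` B.
  move=> z Cz; rewrite /B closed_ballE //=.
  rewrite /closed_ball_ /= sub0r normrN.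
  by apply: (le_trans (hM z Cz)); rewrite /r (le_trans (ler_norm M)) // lerDl.
have cB : compact B.
  apply: bounded_closed_compact; last exact: closed_ball_closed.
  exists r; split; first by rewrite realE ltW.
  move=> x xr y; rewrite /B closed_ballE //= /closed_ball_ /= sub0r normrN => hy.
  by apply: (le_trans hy); apply: ltW.
have /compact_bounded [K [_ hK]] := continuous_compact (continuous_subspaceT cg) cB.
exists (K + 1) => z Cz.
have := hK (K + 1) (ltrDl_ok _ K) (g z) (ex_intro2 _ _ z (CB z Cz) erefl).
by apply: le_trans; apply: ler_norm.
Qed.
Lemma lt_openL (R : realType) (d : nat) (a b : Rd R d -> R) (c e : R) :
  continuous a -> continuous b -> open [set z | a z - c < b z - e].
Proof.
move=> ca cb.
have -> : [set z | a z - c < b z - e] = (b - a) @^-1` [set y | e - c < y].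
  by apply/seteqP; split => z /=; rewrite !fctE; lra.
apply: open_comp; last exact: open_gt.
move=> z _; exact: (continuousB (cb z) (ca z)).
Qed.
Lemma bigU_ordP (T : Type) n (F : 'I_n -> set T) z :
  (\big[setU/set0]_(i < n) F i) z <-> exists i, F i z.
Proof.
split.
  elim/big_rec: _ => [//|i A _ IH [Fi|/IH//]]; by exists i.
by move=> [i Fi]; rewrite (bigD1 i) //=; left.
Qed.

Theorem theorem2 (R : realType) (d n : nat)
  (mu : {measure set (LebRd R d) -> \bar R})
  (p : 'I_n -> Rd R d) (dist : Rd R d -> Rd R d -> R)
  (C : set (Rd R d)) (lam : 'I_n -> R) (w : 'I_n -> R)
  (fw : Rd R d -> Rd R d) :
  (* mu and d-dimensional Lebesgue measure are mutually absolutely continuous *)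
  (forall A : set (LebRd R d), measurable A -> (mu A = 0%E <-> leb_null A)) ->
  (* S = {p_1, ..., p_n} consists of n distinct points *)
  injective p ->
  (* each d_{p_i} is continuous and nonnegative *)
  (forall i, continuous (dist (p i))) ->
  (forall i z, 0 <= dist (p i) z) ->
  (* admissibility *)
  (forall i j, i != j -> forall C' : set (Rd R d), open C' -> bounded_Rd C' ->
     exists m M : R, m < M /\
       continuous (fun g : R => mu (C' `&` Rgam (dist (p i)) (dist (p j)) g)) /\
       {in `[m, M] &, forall g1 g2 : R, g1 <= g2 ->
          (mu (C' `&` Rgam (dist (p i)) (dist (p j)) g1) <=
           mu (C' `&` Rgam (dist (p i)) (dist (p j)) g2))%E} /\
       (forall g, g <= m -> C' `&` Rgam (dist (p i)) (dist (p j)) g = set0) /\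
       (forall g, M <= g -> C' `<=` Rgam (dist (p i)) (dist (p j)) g)) ->
  (* C bounded open, lambda_i > 0, sum lambda_i = mu(C) *)
  open C -> bounded_Rd C ->
  (forall i, 0 < lam i) ->
  mu C = (\sum_(i < n) lam i)%:E ->
  (* the weighted Voronoi regions have the prescribed measures *)
  (forall i, mu (C `&` [set z | forall j, j != i ->
                  dist (p i) z - w i < dist (p j) z - w j]) = (lam i)%:E) ->
  (* f_w maps C_i to p_i *)
  (forall i z, C z -> (forall j, j != i -> dist (p i) z - w i < dist (p j) z - w j) ->
     fw z = p i) ->
  (* on C /\ V_w(S), f_w picks a site minimizing d_{p_i}(z) - w_i *)
  (forall z, C z ->
     ~ (exists i, forall j, j != i -> dist (p i) z - w i < dist (p j) z - w j) ->
     exists i, fw z = p i /\ forall j, dist (p i) z - w i <= dist (p j) z - w j) ->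
  let F_Lam (f : Rd R d -> Rd R d) : Prop :=
    (forall z, C z -> exists i, f z = p i) /\
    forall i, measurable (C `&` f @^-1` [set p i] : set (LebRd R d)) /\
              mu (C `&` f @^-1` [set p i]) = (lam i)%:E in
  let cost (f : Rd R d -> Rd R d) : \bar R :=
    (\int[mu]_(z in (C : set (LebRd R d))) (dist (f z) z)%:E)%E in
  [/\ F_Lam fw,
      forall f, F_Lam f -> (cost fw <= cost f)%E &
      forall f, F_Lam f -> cost f = cost fw ->
        exists N : set (LebRd R d), measurable N /\ mu N = 0%E /\
          forall z, C z -> f z <> fw z -> N z].
Proof.
move=> hmu pinj dcont dge0 _ oC bC lam0 muC hlam hfw1 hfw2 F_Lam cost.
have h0 : @leb_null R d set0 by apply/(hmu set0 measurable0); exact: measure0.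
have mC : measurable (C : set (LebRd R d)) := open_measL _ _ _ h0 oC.
set S := fun i => C `&` [set z | forall j, j != i ->
                  dist (p i) z - w i < dist (p j) z - w j].
have mS : forall i, measurable (S i : set (LebRd R d)).
  move=> i; apply: measurableI => //.
  apply: (fin_bigcap_measurable (D := [set j | j != i])); first exact: finite_finset.
  by move=> j _; apply: (open_measL _ _ _ h0); apply: lt_openL.
have Sdisj : forall i j, i != j -> forall z, S i z -> S j z -> False.
  move=> i j ij z [_ Hi] [_ Hj].
  have ji : j != i by rewrite eq_sym.
  have := Hi j ji; have := Hj i ij; lra.
set U := \big[setU/set0]_(i < n) S i.
have mU : measurable (U : set (LebRd R d)).
  by apply: bigsetU_measurable => i _; exact: mS.
have UP : forall z, U z <-> exists i, S i z.
  by move=> z; rewrite /U bigU_ordP.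
have muU : mu U = (\sum_(i < n) lam i)%:E.
  rewrite /U (measure_bigsetU_ord mu xpredT) //; last first.
    move=> i j _ _ [z [Si Sj]]; apply/eqP; apply/negP => /negP ij.
    exact: (Sdisj i j ij z Si Sj).
  by rewrite -sumEFin; apply: eq_bigr => i _; apply: hlam.
have UC : U `<=` C by move=> z /UP [i [Cz _]].
set Z := C `\` U.
have mZ : measurable (Z : set (LebRd R d)) by apply: measurableD.
have muZ : mu Z = 0%E.
  have : mu C = (mu U + mu Z)%E.
    rewrite -measureU //; first by rewrite /Z setDUK.
    by apply/seteqP; split=> z //= [Uz [_ nUz]].
  rewrite muC muU => h.
  have := congr1 (fun t => (t - (\sum_(i < n) lam i)%:E)%E) h.
  by rewrite /= subee // addeAC subee // add0e.
have hfwC : forall z, C z -> exists i, fw z = p i /\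
    forall j, dist (p i) z - w i <= dist (p j) z - w j.
  move=> z Cz; have [[i Hi]|nex] := pselect (exists i, forall j, j != i ->
      dist (p i) z - w i < dist (p j) z - w j); last exact: hfw2.
  exists i; split; first exact: hfw1.
  move=> j; have [->//|ji] := eqVneq j i; exact/ltW/Hi.
have hnotZ : forall z i, C z -> fw z = p i -> ~ Z z -> S i z.
  move=> z i Cz fi nZ.
  have /UP [j Sj] : U z by apply: contrapT => nU; apply: nZ.
  have fj : fw z = p j by apply: hfw1; case: Sj.
  by have <- : j = i by apply: pinj; rewrite -fj -fi.
have Flam_fw : F_Lam fw.
  split.
    by move=> z Cz; have [i [fi _]] := hfwC z Cz; exists i.
  move=> i.
  have E : C `&` fw @^-1` [set p i] =
      S i `|` ((C `&` fw @^-1` [set p i]) `&` Z).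
    apply/seteqP; split => z.
      move=> [Cz fi]; have [Zz|nZ] := pselect (Z z); first by right.
      by left; apply: hnotZ.
    move=> [Si|[//]]; split; first by case: Si.
    by rewrite /preimage /=; apply: hfw1; case: Si.
  have [mN muN] := null_subL R d mu hmu Z ((C `&` fw @^-1` [set p i]) `&` Z) mZ muZ
    (@subIsetr _ _ _).
  rewrite E; split; first exact: measurableU.
  by rewrite measureU0 //; apply: hlam.
set W := \sum_(i < n) `|w i|.
have wW : forall i, w i <= W.
  move=> i; rewrite /W (bigD1 i) //=; apply: le_trans (ler_norm _) _.
  by rewrite lerDl sumr_ge0 // => k _; exact: normr_ge0.
have Wge : forall i, 0 <= W - w i by move=> i; rewrite subr_ge0.
set A := fun (f : Rd R d -> Rd R d) i => C `&` f @^-1` [set p i].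
set G := fun f (h : 'I_n -> Rd R d -> R) z => \sum_(k < n) \1_(A f k) z * h k z.
have GP : forall f h z i, C z -> f z = p i -> G f h z = h i z.
  move=> f h z i Cz fi; rewrite /G (bigD1 i) //= big1 ?addr0.
    by rewrite indicE mem_set ?mul1r //; split.
  move=> k ki; rewrite indicE memNset ?mul0r //.
  move=> [_ fk]; move: ki; rewrite /preimage /= in fk; rewrite fi in fk.
  by move/pinj: fk => ->; rewrite eqxx.
have mG : forall f h, F_Lam f ->
    (forall k, measurable_fun (C : set (LebRd R d)) (h k : LebRd R d -> R)) ->
    measurable_fun (C : set (LebRd R d)) (G f h : LebRd R d -> R).
  move=> f h [_ Ff] mh; apply: measurable_sum => k; apply: measurable_realfun.measurable_funM => //.
  by apply: measurable_realfun.measurable_indic; exact: (Ff k).1.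
have mdist : forall f, F_Lam f ->
    measurable_fun (C : set (LebRd R d)) (fun z : LebRd R d => dist (f z) z).
  move=> f Ff; apply: (eq_measurable_fun (G f (fun k z => dist (p k) z) : LebRd R d -> R)).
    move=> z; rewrite inE => Cz; have [i fi] := Ff.1 z Cz.
    by rewrite (GP _ _ _ i) // fi.
  by apply: mG => // k; exact: cont_measL.
set v := fun f => G f (fun k _ => W - w k).
have mv : forall f, F_Lam f ->
    measurable_fun (C : set (LebRd R d)) (v f : LebRd R d -> R).
  by move=> f Ff; apply: mG => // k; exact: measurable_cst.
have vP : forall f z i, C z -> f z = p i -> v f z = W - w i.
  by move=> f z i Cz fi; rewrite /v (GP _ _ _ i).
have vge0 : forall f, F_Lam f -> forall z, C z -> 0 <= v f z.
  by move=> f Ff z Cz; have [i fi] := Ff.1 z Cz; rewrite (vP _ _ i).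
set Q := \sum_(k < n) lam k * (W - w k).
have intv : forall f, F_Lam f ->
    (\int[mu]_(z in (C : set (LebRd R d))) (v f z)%:E = Q%:E)%E.
  move=> f Ff; rewrite /v /G /Q.
  under eq_integral => z _ do rewrite -sumEFin.
  rewrite ge0_integral_sum //; last first.
    move=> k z Cz; rewrite lee_fin mulr_ge0 //; exact: indic_ge0.
    move=> k; apply/measurable_realfun.measurable_EFinP.
    apply: measurable_realfun.measurable_funM; last exact: measurable_cst.
    by apply: measurable_realfun.measurable_indic; exact: (Ff.2 k).1.
  rewrite -sumEFin; apply: eq_bigr => k _.
  under eq_integral => z _ do rewrite EFinM muleC.
  rewrite ge0_integralZl_EFin //; first last.
    apply/measurable_realfun.measurable_EFinP.
    by apply: measurable_realfun.measurable_indic; exact: (Ff.2 k).1.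
  rewrite integral_indic //; last exact: (Ff.2 k).1.
  rewrite setIidl; last by move=> z [].
  by rewrite (Ff.2 k).2 -EFinM mulrC.
have dfge0 : forall f, F_Lam f -> forall z, C z -> 0 <= dist (f z) z.
  by move=> f Ff z Cz; have [i ->] := Ff.1 z Cz.
set u := fun f z => (dist (f z) z + v f z)%:E.
have mu_u : forall f, F_Lam f ->
    measurable_fun (C : set (LebRd R d)) (u f : LebRd R d -> \bar R).
  move=> f Ff; apply/measurable_realfun.measurable_EFinP.
  by apply: measurable_funD; [exact: mdist|exact: mv].
have ug0 : forall f, F_Lam f -> forall z, C z -> (0 <= u f z)%E.
  by move=> f Ff z Cz; rewrite /u lee_fin addr_ge0 //; [exact: dfge0|exact: vge0].
have intu : forall f, F_Lam f ->
    (\int[mu]_(z in (C : set (LebRd R d))) u f z = cost f + Q%:E)%E.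
  move=> f Ff; rewrite /u.
  under eq_integral => z _ do rewrite EFinD.
  rewrite ge0_integralD //; first by rewrite intv.
  - by move=> z Cz; rewrite lee_fin; exact: dfge0.
  - by apply/measurable_realfun.measurable_EFinP; exact: mdist.
  - by move=> z Cz; rewrite lee_fin; exact: vge0.
  - by apply/measurable_realfun.measurable_EFinP; exact: mv.
have uP : forall f, F_Lam f -> forall z, C z -> (u fw z <= u f z)%E.
  move=> f Ff z Cz; have [i fi] := Ff.1 z Cz; have [j [fj hj]] := hfwC z Cz.
  rewrite /u lee_fin (vP f z i) // (vP fw z j) // fi fj.
  by have := hj i; lra.
have part2 : forall f, F_Lam f -> (cost fw <= cost f)%E.
  move=> f Ff; rewrite -(leeD2rE (x := Q%:E)) // -!intu //.
  apply: ge0_le_integral => //; [exact: ug0|exact: mu_u|exact: mu_u|exact: uP].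
split => //.
move=> f Ff cfe.
have /choice [Kf hKf] : forall i, exists K, forall z, C z -> dist (p i) z <= K.
  by move=> i; exact: bound_contL.
have absW : forall i, `|w i| <= W.
  move=> i; rewrite /W (bigD1 i) //= lerDl.
  by rewrite sumr_ge0 // => k _; exact: normr_ge0.
set Kb := \sum_(i < n) `|Kf i| + (W + W).
have uB : forall z, C z -> (u fw z <= Kb%:E)%E.
  move=> z Cz; have [j [fj _]] := hfwC z Cz.
  rewrite /u lee_fin (vP fw z j) // fj /Kb.
  have h1 : dist (p j) z <= \sum_(i < n) `|Kf i|.
    apply: le_trans (hKf j z Cz) _; apply: le_trans (ler_norm _) _.
    rewrite (bigD1 j) //= lerDl.
    by rewrite sumr_ge0 // => k _; exact: normr_ge0.
  have h2 := absW j; have h3 := ler_norm (- w j); rewrite normrN in h3.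
  lra.
have fin : (\int[mu]_(z in (C : set (LebRd R d))) u fw z)%E \is a fin_num.
  rewrite ge0_fin_numE; last by apply: integral_ge0; exact: ug0.
  apply: (@le_lt_trans _ _ (\int[mu]_(z in (C : set (LebRd R d))) (cst Kb%:E) z)%E).
    by apply: ge0_le_integral => //; [exact: ug0|exact: mu_u].
  by rewrite integral_cst // muC -EFinM ltry.
set D := fun z => dist (f z) z + v f z - (dist (fw z) z + v fw z).
have Dge0 : forall z, C z -> 0 <= D z.
  by move=> z Cz; have := uP f Ff z Cz; rewrite /u lee_fin /D subr_ge0.
have mD : measurable_fun (C : set (LebRd R d)) (D : LebRd R d -> R).
  by apply: measurable_funB; apply: measurable_funD;
    [exact: mdist|exact: mv|exact: mdist|exact: mv].
have intD : (\int[mu]_(z in (C : set (LebRd R d))) (D z)%:E = 0)%E.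
  have e : (\int[mu]_(z in (C : set (LebRd R d))) u f z =
      \int[mu]_(z in (C : set (LebRd R d))) u fw z +
      \int[mu]_(z in (C : set (LebRd R d))) (D z)%:E)%E.
    rewrite -ge0_integralD //; last 3 first.
    - exact: ug0.
    - exact: mu_u.
    - by apply/measurable_realfun.measurable_EFinP.
    by apply: eq_integral => z _; rewrite /u /D -EFinD; congr EFin; lra.
  move: e; rewrite !intu // cfe -intu // => e.
  have := congr1 (fun t => (t - \int[mu]_(z in (C : set (LebRd R d))) u fw z)%E) e.
  by rewrite /= subee // addeAC subee // add0e => <-.
have : (\int[mu]_(z in (C : set (LebRd R d))) `|(D z)%:E| = 0)%E.
  rewrite -intD; apply: eq_integral => z; rewrite inE => Cz.
  by rewrite gee0_abs // lee_fin; exact: Dge0.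
move/(ae_eq_integral_abs mu mC (f := fun z => (D z)%:E)).
move=> /(_ _) [].
  by apply/measurable_realfun.measurable_EFinP.
move=> N [mN N0 subN].
exists (N `|` Z); split; first exact: measurableU.
split; first by rewrite measureU0.
move=> z Cz fne.
have [Zz|nZ] := pselect (Z z); first by right.
left; apply: subN => /= h.
have [j [fj _]] := hfwC z Cz; have [_ Sj] := hnotZ z j Cz fj nZ.
have [i fi] := Ff.1 z Cz.
have ij : i != j by apply/eqP => ij; apply: fne; rewrite fi fj ij.
have := Sj i ij; have := h Cz; rewrite /D (vP f z i) // (vP fw z j) // fi fj.
by move=> [] /= ; lra.
Qed.
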